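(* Let $\mathbb F$ be an algebraically closed field of characteristic zero, $\mathbf n=(n_1,\dots,n_k)$, $\mathbf d=(d_1,\dots,d_k)$ tuples of positive integers, $d=d_1+\cdots+d_k$. For every nonzero linear map $\phi:V(\mathbf n,\mathbf d)\to M_{p,q}$ (matrix-rank method with simples $S(\mathbf n,\mathbf d)$), $$\mathrm{Pot}(\phi)\le Y_{\mathbf n,\mathbf d}+Z_{\mathbf n,\mathbf d},$$ where, with variables $\mathbf z=(\mathbf z_1,\dots,\mathbf z_k)$, $\mathbf z_i=(z_{i1},\dots,z_{in_i})$, $Y_{\mathbf n,\mathbf d}$ is the number of monomials in $\mathbf z$ with set multi-degree $\preceq\mathbf d$ and total degree $\le\lfloor d/2\rfloor$, and $Z_{\mathbf n,\mathbf d}$ is the number of monomials in $\mathbf z$ with set multi-degree $\preceq\mathbf d$ and total degree $\le d-(\lfloor d/2\rfloor+1)$.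
   Context: $P(N,e)$: homogeneous degree-$e$ polynomials in $N$ variables. $V(\mathbf n,\mathbf d)=P(n_1+1,d_1)\otimes\cdots\otimes P(n_k+1,d_k)$ and $S(\mathbf n,\mathbf d)=\{\ell_1^{d_1}\otimes\cdots\otimes\ell_k^{d_k}:\ell_i\in P(n_i+1,1)\}$. The set multi-degree of the monomial $\prod_{i,j}z_{ij}^{e_{ij}}$ is $(\sum_je_{1j},\dots,\sum_je_{kj})\in\mathbb N^k$; $\preceq$ is the componentwise order on $\mathbb N^k$. For linear $\phi:V\to M_{p,q}$ and spanning $S$, $\mu_\phi(v)=\mathrm{rank}(\phi(v))$, $\mu_\phi(X)=\max_{x\in X}\mu_\phi(x)$, $\mathrm{Pot}(\phi)=\mu_\phi(V)/\mu_\phi(S)$. *)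

(* Defs.v *)
From HB Require Import structures.
From mathcomp Require Import all_boot all_order all_algebra.
From Stdlib Require Import ClassicalEpsilon.
Set Implicit Arguments. Unset Strict Implicit. Unset Printing Implicit Defensive.
Import Order.TTheory GRing.Theory Num.Theory.

Definition pb (P : Prop) : bool :=
  if excluded_middle_informative P then true else false.

(* bounds used to encode exponent vectors in a single finite type *)
Definition mmax k (n : 'I_k -> nat) : nat := \max_(i < k) n i.

Definition Expo k (n d : 'I_k -> nat) :=
  {ffun 'I_k -> {ffun 'I_(mmax n).+1 -> 'I_(mmax d).+1}}.

(* Exponents of the monomial basis of P(n_1+1,d_1) (x) ... (x) P(n_k+1,d_k):
   for each i, variables x_{i0},...,x_{i n_i}, total degree exactly d_i. *)
Definition valid_expo k (n d : 'I_k -> nat) (e : Expo n d) : bool :=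
  [forall i, [forall j : 'I_(mmax n).+1, (n i < j) ==> ((e i j : nat) == 0)]]
  && [forall i, (\sum_(j < (mmax n).+1) (e i j : nat)) == d i].

Definition Basis k (n d : 'I_k -> nat) := {e : Expo n d | valid_expo e}.

(* V(n,d), in coordinates w.r.t. the monomial basis (tensor products of
   monomials). *)
(* F^o is F regarded as a left module over itself, so that V gets its
   canonical F-vector-space (lmodType F) structure. *)
Notation V F n d := {ffun Basis n d -> F^o}.

Definition multinom (D : nat) m (alpha : 'I_m -> nat) : nat :=
  D`! %/ \prod_(j < m) (alpha j)`!.

(* The simple tensor l_1^{d_1} (x) ... (x) l_k^{d_k}, where
   l_i = sum_{j <= n_i} a i j * x_{ij}; its coordinates are given by the
   multinomial theorem. (Coefficients a i j for j > n_i are irrelevant.) *)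
Definition simple (F : fieldType) k (n d : 'I_k -> nat)
  (a : 'I_k -> 'I_(mmax n).+1 -> F) : V F n d :=
  [ffun b : Basis n d =>
     (\prod_(i < k)
       ((multinom (d i) (fun j => (val b i j : nat)))%:R
        * \prod_(j < (mmax n).+1) a i j ^+ (val b i j)))%R].

Definition Sset (F : fieldType) k (n d : 'I_k -> nat) (v : V F n d) : Prop :=
  exists a : 'I_k -> 'I_(mmax n).+1 -> F, v = @simple F k n d a.

Definition mu (F : fieldType) (W : Type) p q (phi : W -> 'M[F]_(p, q))
  (X : W -> Prop) : nat :=
  \max_(r < p.+1 | pb (exists x, X x /\ \rank (phi x) = r)) (r : nat).

Definition Pot (F : fieldType) k (n d : 'I_k -> nat) p q
  (phi : V F n d -> 'M[F]_(p, q)) : rat :=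
  (((mu phi (fun _ => True))%:R / (mu phi (@Sset F k n d))%:R)%R : rat).

(* Since
   e_{ij} <= d_i <= max d, every such monomial is encoded in Expo n d. *)
Definition monoCount k (n d : 'I_k -> nat) (P : nat -> bool) : nat :=
  #|[set e : Expo n d |
      [forall i, [forall j : 'I_(mmax n).+1, (n i <= j) ==> ((e i j : nat) == 0)]]
      && [forall i, (\sum_(j < (mmax n).+1) (e i j : nat)) <= d i]
      && P (\sum_(i < k) \sum_(j < (mmax n).+1) (e i j : nat))]|.

Definition dsum k (d : 'I_k -> nat) := \sum_(i < k) d i.

Definition Ynd k (n d : 'I_k -> nat) :=
  monoCount n d (fun t => t <= (dsum d)./2).

(* Z: total degree <= d - (floor(d/2) + 1)  (no truncated subtraction) *)
Definition Znd k (n d : 'I_k -> nat) :=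
  monoCount n d (fun t => t + ((dsum d)./2).+1 <= dsum d).

(* Main.v *)
Require Import Defs.
From HB Require Import structures.
From mathcomp Require Import all_boot all_order all_algebra.
From mathcomp Require Import zify ring.
From Stdlib Require Import ClassicalEpsilon Classical.
Import Order.TTheory GRing.Theory Num.Theory.
Set Implicit Arguments. Unset Strict Implicit. Unset Printing Implicit Defensive.
Local Open Scope ring_scope.

Lemma poly_zero_everywhere (F : closedFieldType) (p : {poly F}) :
  (forall x, p.[x] = 0) -> p = 0.
Proof.
move=> H; apply/eqP; apply: contraT => pn0.
have sz : size (p * 'X + 1) != 1%N.
  have h : size (p * 'X) = (size p).+1 by rewrite size_mulX.
  by rewrite size_polyDl h ?size_polyC ?oner_neq0 ?ltnS ?lt0n ?size_poly_eq0 // eqSS size_poly_eq0.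
move/closed_rootP: sz => [x /rootP].
by rewrite hornerD hornerMX H mul0r hornerC add0r => /eqP; rewrite oner_eq0.
Qed.

Lemma digits_lt (B N : nat) (c : 'I_N -> nat) :
  (forall i, c i < B)%N -> (\sum_(i < N) c i * B ^ i < B ^ N)%N.
Proof.
elim: N c => [|N IH] c Hc; first by rewrite big_ord0 expn0.
rewrite big_ord_recr /= expnS.
have := IH (fun i => c (widen_ord (leqnSn N) i)) (fun i => Hc _).
have := Hc ord_max => /=.
move=> h1 h2.
move: (B ^ N)%N h2 => X h2.
nia.
Qed.

Lemma digits_inj (B N : nat) (c c' : 'I_N -> nat) :
  (forall i, c i < B)%N -> (forall i, c' i < B)%N ->
  (\sum_(i < N) c i * B ^ i = \sum_(i < N) c' i * B ^ i)%N ->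
  forall i, c i = c' i.
Proof.
elim: N c c' => [|N IH] c c' Hc Hc' E i; first by case: i.
have split (f : 'I_N.+1 -> nat) : (\sum_(i < N.+1) f i * B ^ i =
   f ord0 + B * \sum_(i < N) f (lift ord0 i) * B ^ i)%N.
  rewrite big_ord_recl expn0 muln1 big_distrr /=; congr (_ + _)%N.
  by apply: eq_bigr => j _; rewrite /bump /= add1n expnS mulnCA mulnA.
rewrite !split in E.
have B0 : (0 < B)%N by apply: leq_ltn_trans (Hc i).
have E0 : c ord0 = c' ord0.
  have key (x y : nat) : ((x + B * y) %% B = x %% B)%N by rewrite mulnC addnC modnMDl.
  have := congr1 (fun x => x %% B)%N E => /=.
  by rewrite !key !modn_small.
have E1 : (\sum_(i < N) c (lift ord0 i) * B ^ i = \sum_(i < N) c' (lift ord0 i) * B ^ i)%N.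
  rewrite E0 in E.
  move/addnI: E => /eqP; rewrite eqn_mul2l; case/orP => [/eqP B00|/eqP //].
  by rewrite B00 in B0.
have := IH _ _ (fun j => Hc _) (fun j => Hc' _) E1.
by case: (unliftP ord0 i) => [j ->|->] // ->.
Qed.

Lemma LA1 (F : fieldType) p q r (M : 'M[F]_(p, q)) (L : 'M_(r, p)) (R : 'M_(q, r)) :
  (\rank M <= r)%N -> (L *m M *m R) \in unitmx ->
  M = M *m R *m invmx (L *m M *m R) *m L *m M.
Proof.
move=> rM uC.
have sub : ((M *m R)^T <= M^T)%MS by rewrite trmx_mul submxMl.
have rk : (\rank M^T <= \rank (M *m R)^T)%N.
  rewrite !mxrank_tr (leq_trans rM) //.
  by rewrite -{1}(mxrank_unit uC) -mulmxA mxrankM_maxr.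
have := mxrank_leqif_sup sub => /leqifP.
case: ifP => [sub2 _|_]; last by rewrite ltnNge rk.
move/submxP: sub2 => [D HD].
have HM : M = M *m R *m D^T by rewrite -{1}[M]trmxK HD trmx_mul trmxK.
have HL : D^T = invmx (L *m M *m R) *m (L *m M).
  have E : L *m M = (L *m M *m R) *m D^T by rewrite {1}HM !mulmxA.
  by rewrite {2}E mulKmx.
by rewrite -[M *m R *m _ *m L *m M]mulmxA -[M *m R *m _ *m (L *m M)]mulmxA -HL -HM.
Qed.

Lemma rank_split (F : fieldType) p q (M : 'M[F]_(p, q)) m1 m2
  (U : 'M_(m1, p)) (W : 'M_(m2, q)) :
  (forall (u : 'rV_p) (w : 'rV_q), u *m U^T = 0 -> w *m W^T = 0 ->
     u *m M *m w^T = 0) ->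
  (\rank M <= \rank U + \rank W)%N.
Proof.
move=> H.
set Ku := kermx U^T; set Kw := kermx W^T.
have H1 i : row i Ku *m U^T = 0 by rewrite -row_mul mulmx_ker row0.
have H2 j : row j Kw *m W^T = 0 by rewrite -row_mul mulmx_ker row0.
have H3 : Ku *m M *m Kw^T = 0.
  apply/row_matrixP => i; rewrite row0 !row_mul.
  apply: trmx_inj; rewrite trmx_mul trmx0; apply/row_matrixP => j.
  by rewrite row0 trmxK row_mul -[row j Kw]trmxK -trmx_mul H ?trmx0 // -row_mul; exact: H1.
have r1 : (\rank (Ku *m M) <= \rank W)%N.
  have : (Ku *m M <= kermx Kw^T)%MS by rewrite sub_kermx H3.
  move/mxrankS; rewrite mxrank_ker mxrank_tr mxrank_ker mxrank_tr.
  by rewrite subKn // rank_leq_col.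
have r2 := mxrank_mul_min Ku M.
rewrite mxrank_ker mxrank_tr in r2.
have r3 := rank_leq_col U.
lia.
Qed.

Definition cb (F : fieldType) k (n d : 'I_k -> nat) (b : Basis n d) : F :=
  \prod_(i < k) (multinom (d i) (fun j => (val b i j : nat)))%:R.

Definition deg k (n d : 'I_k -> nat) (g : Expo n d) : nat :=
  (\sum_(i < k) \sum_(j < (mmax n).+1) (g i j : nat))%N.

Definition sG (F : fieldType) k (n d : 'I_k -> nat)
  (s : 'I_k -> 'I_(mmax n).+1 -> F) (g : Expo n d) : F :=
  \prod_(i < k) \prod_(j < (mmax n).+1) s i j ^+ g i j.

Definition qv (F : fieldType) k (n d : 'I_k -> nat)
  (a0 : 'I_k -> 'I_(mmax n).+1 -> F) (g : Expo n d) : V F n d :=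
  [ffun b : Basis n d => cb F b * \prod_(i < k) \prod_(j < (mmax n).+1)
      ('C(val b i j, g i j)%:R * a0 i j ^+ (val b i j - g i j))].

Lemma simpleE (F : fieldType) k (n d : 'I_k -> nat) a (b : Basis n d) :
  simple d a b = cb F b * \prod_(i < k) \prod_(j < (mmax n).+1) a i j ^+ (val b i j).
Proof. by rewrite ffunE big_split. Qed.

Lemma simple_ext (F : fieldType) k (n d : 'I_k -> nat) a a' :
  (forall i j, a i j = a' i j) -> @simple F k n d a = simple d a'.
Proof.
move=> H; apply/ffunP => b; rewrite !simpleE; congr (_ * _).
by apply: eq_bigr => i _; apply: eq_bigr => j _; rewrite H.
Qed.

Lemma binomK (F : fieldType) (K b : nat) (x y : F) : (b < K)%N ->
  (x + y) ^+ b = \sum_(g < K) 'C(b, g)%:R * x ^+ (b - g) * y ^+ g.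
Proof.
move=> hb; rewrite exprDn (big_ord_widen K (fun g => x ^+ (b - g) * y ^+ g *+ 'C(b, g)) hb).
rewrite big_mkcond; apply: eq_bigr => g _; case: ifP => h.
  by rewrite mulr_natl mulrnAl.
by rewrite bin_small ?mul0r ?mulr0 // ltnNge -ltnS h.
Qed.

Lemma expansion (F : fieldType) k (n d : 'I_k -> nat) a0 s (t : F) :
  simple d (fun i j => a0 i j + t * s i j) =
  \sum_(g : Expo n d) (t ^+ deg g * sG s g) *: qv a0 g.
Proof.
apply/ffunP => b; rewrite simpleE sum_ffunE.
have e1 : forall i j, (a0 i j + t * s i j) ^+ (val b i j) =
   \sum_(g < (mmax d).+1) ('C(val b i j, g)%:R * a0 i j ^+ (val b i j - g)) * (t * s i j) ^+ g.
  by move=> i j; rewrite (binomK _ _ (ltn_ord _)).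
under eq_bigr => i _ do under eq_bigr => j _ do rewrite e1.
under eq_bigr => i _ do rewrite bigA_distr_bigA /=.
rewrite bigA_distr_bigA /= mulr_sumr.
apply: eq_bigr => G _.
rewrite !ffunE /deg /sG.
have sc (c x : F) : (c *: (x : F^o)) = c * x by [].
rewrite sc mulrCA; congr (_ * _).
rewrite -prodrXr -!big_split /=.
apply: eq_bigr => i _; rewrite -prodrXr -!big_split /=.
apply: eq_bigr => j _; by rewrite exprMn mulrC.
Qed.

Definition Pp (F : fieldType) k (n d : 'I_k -> nat) p q
  (phi : V F n d -> 'M[F]_(p, q)) a0 s : 'M[{poly F}]_(p, q) :=
  \sum_(g : Expo n d) (sG s g *: 'X^(deg g)) *: map_mx polyC (phi (qv a0 g)).

Lemma ev_Pp (F : fieldType) k (n d : 'I_k -> nat) p q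
  (phi : {linear V F n d -> 'M[F]_(p, q)}) a0 s (t : F) :
  map_mx (horner_eval t) (Pp phi a0 s) = phi (simple d (fun i j => a0 i j + t * s i j)).
Proof.
rewrite expansion linear_sum; apply/matrixP => i j.
rewrite !mxE !summxE rmorph_sum; apply: eq_bigr => g _.
rewrite linearZ /= !mxE /horner_eval hornerM hornerZ hornerXn hornerC.
by rewrite [sG s g * _]mulrC.
Qed.

Lemma coef_Pp (F : fieldType) k (n d : 'I_k -> nat) p q x y
  (phi : {linear V F n d -> 'M[F]_(p, q)}) a0 s
  (X : 'M[F]_(x, p)) (Y : 'M[F]_(q, y)) c1 c2 e :
  ((map_mx polyC X *m Pp phi a0 s *m map_mx polyC Y) c1 c2)`_e =
  \sum_(g : Expo n d) (deg g == e)%:R * sG s g * (X *m phi (qv a0 g) *m Y) c1 c2.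
Proof.
rewrite /Pp mulmx_sumr mulmx_suml summxE coef_sum; apply: eq_bigr => g _.
rewrite -scalemxAr -scalemxAl -!map_mxM !mxE coefMC coefZ coefXn.
by rewrite eq_sym [sG s g * _]mulrC.
Qed.

Definition Gam k (n d : 'I_k -> nat) (g : Expo n d) : bool :=
  [forall i, [forall j : 'I_(mmax n).+1, (n i <= j)%N ==> ((g i j : nat) == 0%N)]]
  && [forall i, (\sum_(j < (mmax n).+1) (g i j : nat) <= d i)%N].

Lemma monoCountE k (n d : 'I_k -> nat) P :
  monoCount n d P = #|[set e : Expo n d | Gam e && P (deg e)]|.
Proof. by []. Qed.

Lemma n_le_mmax k (n : 'I_k -> nat) i : (n i < (mmax n).+1)%N.
Proof. by rewrite ltnS /mmax; apply: (leq_bigmax i). Qed.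

Lemma valid1 k (n d : 'I_k -> nat) (b : Basis n d) i (j : 'I_(mmax n).+1) :
  (n i < j)%N -> (val b i j : nat) = 0%N.
Proof.
case: b => e /= /andP [/forallP /(_ i) /forallP /(_ j) /implyP H _] h.
by apply/eqP; apply: H.
Qed.

Lemma valid2 k (n d : 'I_k -> nat) (b : Basis n d) i :
  (\sum_(j < (mmax n).+1) (val b i j : nat))%N = d i.
Proof. by case: b => e /= /andP [_ /forallP /(_ i) /eqP]. Qed.

Lemma Lvanish (F : fieldType) k (n d : 'I_k -> nat) (a0 s : 'I_k -> 'I_(mmax n).+1 -> F) (g : Expo n d) :
  (forall i, s i (inord (n i)) = 0 :> F) -> ~~ Gam g ->
  sG s g = 0 \/ qv a0 g = 0.
Proof.
move=> hs; rewrite negb_and => /orP [/forallPn [i /forallPn [j]] | /forallPn [i]].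
  rewrite negb_imply => /andP [hj hg].
  case: (eqVneq (j : nat) (n i)) => hji.
    left; rewrite /sG (bigD1 i) //= (bigD1 j) //=.
    have ej : j = inord (n i) by apply: val_inj; rewrite /= inordK ?n_le_mmax.
    rewrite ej in hg *.
    by rewrite hs expr0n (negbTE hg) !mul0r.
  right; apply/ffunP => b; rewrite !ffunE.
  rewrite (bigD1 i) //= (bigD1 j) //= valid1; last by rewrite ltn_neqAle eq_sym hji.
  by rewrite bin0n (negbTE hg) !mul0r mulr0.
rewrite -ltnNge => hi; right; apply/ffunP => b; rewrite !ffunE.
have [j hj] : exists j : 'I_(mmax n).+1, (val b i j < g i j)%N.
  apply/existsP; apply: contraTT hi => /existsPn H.
  rewrite -leqNgt -(valid2 b i); apply: leq_sum => j _.
  by rewrite leqNgt H.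
by rewrite (bigD1 i) //= (bigD1 j) //= bin_small // !mul0r mulr0.
Qed.

Lemma deg_Gam k (n d : 'I_k -> nat) (g : Expo n d) : Gam g -> (deg g <= dsum d)%N.
Proof.
case/andP => _ /forallP H; rewrite /deg /dsum; apply: leq_sum => i _; exact: H.
Qed.

Lemma evC (F : fieldType) m1 m2 (M : 'M[F]_(m1, m2)) t :
  map_mx (horner_eval t) (map_mx polyC M) = M.
Proof. by apply/matrixP => i j; rewrite !mxE /horner_eval hornerC. Qed.

Lemma low_zero (F : fieldType) (N : nat) (p : {poly F}) :
  (forall e, (e < N)%N -> p`_e = 0) -> p = 'X^N * drop_poly N p.
Proof.
move=> H; rewrite -{1}(poly_take_drop N p) mulrC.
have -> : take_poly N p = 0; last by rewrite add0r.
apply/polyP => i; rewrite coef0 /take_poly coef_poly; case: ifP => // /H //.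
Qed.

Lemma adj_inv (F : fieldType) r (C : 'M[F]_r) : C \in unitmx ->
  \adj C = \det C *: invmx C.
Proof.
move=> uC; rewrite -[\adj C](mulKmx uC) mul_mx_adj.
by rewrite -scalemx1 -scalemxAr mulmx1.
Qed.

Lemma E2 (F : closedFieldType) k (n d : 'I_k -> nat) p q r
  (phi : {linear V F n d -> 'M[F]_(p, q)}) (a0 s : 'I_k -> 'I_(mmax n).+1 -> F)
  (L : 'M[F]_(r, p)) (R : 'M[F]_(q, r)) (u : 'rV[F]_p) (w : 'rV[F]_q) (a : nat) :
  (a <= dsum d)%N ->
  (forall a', (\rank (phi (simple d a')) <= r)%N) ->
  \det (L *m phi (simple d a0) *m R) != 0 ->
  (forall i, s i (inord (n i)) = 0) ->
  (forall g, Gam g -> (deg g <= a)%N -> u *m phi (qv a0 g) *m R = 0) ->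
  (forall g, Gam g -> (deg g + a.+1 <= dsum d)%N -> L *m phi (qv a0 g) *m w^T = 0) ->
  u *m phi (simple d (fun i j => a0 i j + s i j)) *m w^T = 0.
Proof.
move=> haD hrk hdet hs hU hW.
set D := dsum d.
set P := Pp phi a0 s.
set u' := map_mx polyC u; set w' := map_mx polyC w^T.
set L' := map_mx polyC L; set R' := map_mx polyC R.
set Ap := u' *m P *m R'; set Bp := L' *m P *m w'; set Cp := L' *m P *m R'.
set gp := (u' *m P *m w') 0 0.
set h2 := (Ap *m \adj Cp *m Bp) 0 0.
have evP t : map_mx (horner_eval t) P = phi (simple d (fun i j => a0 i j + t * s i j)).
  exact: ev_Pp.
have ev3 t m1 m2 (X : 'M[F]_(m1, p)) (Y : 'M[F]_(q, m2)) :
   map_mx (horner_eval t) (map_mx polyC X *m P *m map_mx polyC Y) =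
   X *m phi (simple d (fun i j => a0 i j + t * s i j)) *m Y.
  by rewrite !map_mxM !evC evP.
have d0 : (\det Cp).[0] != 0.
  rewrite -[_.[0]]/(horner_eval 0 _) -det_map_mx ev3.
  by rewrite (@simple_ext F k n d (fun i j => a0 i j + 0 * s i j) a0) // => i j; rewrite mul0r addr0.
have dC0 : \det Cp != 0 by apply: contraNneq d0 => ->; rewrite horner0.
have key : \det Cp * gp = h2.
  apply/eqP; rewrite -subr_eq0; apply/eqP.
  apply: (mulfI dC0); rewrite mulr0; apply: poly_zero_everywhere => t.
  rewrite hornerM hornerD hornerN hornerM.
  set Mt := phi (simple d (fun i j => a0 i j + t * s i j)).
  have eC : (\det Cp).[t] = \det (L *m Mt *m R).
    by rewrite -[_.[t]]/(horner_eval t _) -det_map_mx ev3.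
  have eg : gp.[t] = (u *m Mt *m w^T) 0 0.
    by rewrite -[_.[t]]/(horner_eval t _) -(ev3 t) mxE.
  have eh : h2.[t] = (u *m Mt *m R *m \adj (L *m Mt *m R) *m (L *m Mt *m w^T)) 0 0.
    rewrite -[_.[t]]/(horner_eval t _) /h2.
    have -> : horner_eval t ((Ap *m \adj Cp *m Bp) 0 0) =
      (map_mx (horner_eval t) (Ap *m \adj Cp *m Bp)) 0 0 by rewrite [in RHS]mxE.
    by rewrite !map_mxM map_mx_adj -!map_mxM /Cp !ev3.
  rewrite eC eg eh.
  case: (eqVneq (\det (L *m Mt *m R)) 0) => [->|dn0]; first by rewrite mul0r.
  have uC : L *m Mt *m R \in unitmx by rewrite unitmxE unitfE.
  have HM : Mt = Mt *m R *m invmx (L *m Mt *m R) *m L *m Mt := LA1 (hrk _) uC.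
  have e : u *m Mt *m R *m invmx (L *m Mt *m R) *m (L *m Mt *m w^T) = u *m Mt *m w^T.
    by rewrite [in RHS]HM !mulmxA.
  by rewrite (adj_inv uC) -scalemxAr -scalemxAl e [X in _ - X]mxE subrr mulr0.
have coefA c e : (e < a.+1)%N -> (Ap 0 c)`_e = 0.
  move=> he; rewrite /Ap coef_Pp; apply: big1 => g _.
  case: eqP => [hg|_]; last by rewrite !mul0r.
  case hG : (Gam g).
    by rewrite hU ?mxE ?mulr0 // hg -ltnS.
  case: (Lvanish a0 hs (negbT hG)) => [->|->]; first by rewrite mulr0 mul0r.
  by rewrite linear0 mulmx0 mul0mx mxE mulr0.
have coefB c e : (e < D - a)%N -> (Bp c 0)`_e = 0.
  move=> he; rewrite /Bp coef_Pp; apply: big1 => g _.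
  case: eqP => [hg|_]; last by rewrite !mul0r.
  case hG : (Gam g).
    rewrite hW ?mxE ?mulr0 // hg; move: he haD; rewrite /D; lia.
  case: (Lvanish a0 hs (negbT hG)) => [->|->]; first by rewrite mulr0 mul0r.
  by rewrite linear0 mulmx0 mul0mx mxE mulr0.
have Ad : Ap = 'X^(a.+1) *: map_mx (drop_poly a.+1) Ap.
  apply/matrixP => i c; rewrite [in RHS]mxE [in RHS]mxE (ord1 i).
  exact: low_zero (coefA c).
have Bd : Bp = 'X^(D - a) *: map_mx (drop_poly (D - a)) Bp.
  apply/matrixP => c i; rewrite [in RHS]mxE [in RHS]mxE (ord1 i).
  exact: low_zero (coefB c).
have eh2 : h2 = 'X^(D.+1) * (map_mx (drop_poly a.+1) Ap *m \adj Cp *m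
                     map_mx (drop_poly (D - a)) Bp) 0 0.
  rewrite /h2 {1}Ad {1}Bd -scalemxAl -scalemxAr -scalemxAl scalerA mxE -exprD.
  by congr (_ * _); congr (_ ^+ _); move: haD; rewrite /D; lia.
have hdiv : 'X^(D.+1) %| gp * \det Cp by rewrite mulrC key eh2 dvdp_mulIl.
have cop : coprimep ('X^(D.+1)) (\det Cp).
  apply: coprimep_expl; rewrite coprimep_sym -[X in coprimep _ X]subr0 -polyC0.
  by rewrite coprimep_XsubC; apply/rootP/eqP.
rewrite (Gauss_dvdpl _ cop) in hdiv.
have szg : (size gp <= D.+1)%N.
  apply/leq_sizeP => e he; rewrite /gp coef_Pp; apply: big1 => g _.
  case: eqP => [hg|_]; last by rewrite !mul0r.
  case hG : (Gam g).
    by have := deg_Gam hG; rewrite hg; move: he; rewrite /D; lia.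
  case: (Lvanish a0 hs (negbT hG)) => [->|->]; first by rewrite mulr0 mul0r.
  by rewrite linear0 mulmx0 mul0mx mxE mulr0.
have g0 : gp = 0.
  apply/eqP; apply: contraT => gn0.
  by have := dvdp_leq gn0 hdiv; rewrite size_polyXn ltnNge szg.
apply/matrixP => i j; rewrite (ord1 i) (ord1 j) [RHS]mxE.
have := congr1 (horner_eval 1) g0; rewrite rmorph0 => <-.
rewrite /gp -[horner_eval 1 _]/(horner_eval 1 ((u' *m P *m w') 0 0)).
have -> : horner_eval 1 ((u' *m P *m w') 0 0) = (map_mx (horner_eval 1) (u' *m P *m w')) 0 0.
  by rewrite [in RHS]mxE.
rewrite ev3.
by rewrite (@simple_ext F k n d (fun i j => a0 i j + 1 * s i j) (fun i j => a0 i j + s i j)) // => i' j'; rewrite mul1r.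
Qed.

Lemma E3 (F : fieldType) k (n d : 'I_k -> nat) (a a0 : 'I_k -> 'I_(mmax n).+1 -> F) :
  (forall i, a i (inord (n i)) != 0) -> (forall i, a0 i (inord (n i)) != 0) ->
  exists c : F, exists s : 'I_k -> 'I_(mmax n).+1 -> F,
    (forall i, s i (inord (n i)) = 0) /\
    simple d a = c *: simple d (fun i j => a0 i j + s i j).
Proof.
move=> ha ha0.
pose lam i := a i (inord (n i)) / a0 i (inord (n i)).
have lam0 i : lam i != 0 by rewrite /lam mulf_neq0 ?invr_eq0.
pose s i j := if j == inord (n i) then 0 else a i j / lam i - a0 i j.
exists (\prod_(i < k) lam i ^+ d i), s; split.
  by move=> i; rewrite /s eqxx.
have ea i j : a i j = lam i * (a0 i j + s i j).
  rewrite /s; case: eqP => [->|_].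
    by rewrite addr0 /lam divfK.
  by rewrite addrC subrK mulrC divfK.
apply/ffunP => b; rewrite [in RHS]ffunE !simpleE.
have sc (c x : F) : (c *: (x : F^o)) = c * x by [].
rewrite sc mulrCA; congr (_ * _).
rewrite -big_split /=; apply: eq_bigr => i _.
under eq_bigr => j _ do rewrite ea exprMn.
by rewrite big_split /= prodrXr valid2.
Qed.

Lemma prod_fact_le N (al : 'I_N -> nat) :
  (\prod_(j < N) (al j)`! <= (\sum_(j < N) al j)`!)%N.
Proof.
elim: N al => [|N IH] al; first by rewrite !big_ord0.
rewrite big_ord_recr big_ord_recr /=.
set S := (\sum_(i < N) al (widen_ord (leqnSn N) i))%N.
set x := al ord_max.
apply: (@leq_trans (S`! * x`!)); first by rewrite leq_mul2r IH orbT.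
have := bin_fact (leq_addr x S); rewrite addKn => <-.
by rewrite leq_pmull // bin_gt0 leq_addr.
Qed.

Lemma multinom_gt0 D N (al : 'I_N -> nat) : (\sum_(j < N) al j)%N = D ->
  (0 < multinom D al)%N.
Proof.
move=> hD; rewrite /multinom divn_gt0 -?hD ?prod_fact_le //.
by rewrite prodn_gt0 // => j; rewrite fact_gt0.
Qed.

Lemma cb_neq0 (F : fieldType) (hF : [pchar F] =i pred0) k (n d : 'I_k -> nat)
  (b : Basis n d) : cb F b != 0.
Proof.
rewrite /cb prodf_seq_neq0; apply/allP => i _ /=.
by rewrite (pcharf0P F).1 // -lt0n multinom_gt0 // valid2.
Qed.

Definition Ek k (n d : 'I_k -> nat) (b : Basis n d) : nat :=
  (\sum_(i < k) \sum_(j < (mmax n).+1)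
     (val b i j : nat) * (mmax d).+1 ^ ((mmax n).+1 * i + j))%N.

Lemma Einj k (n d : 'I_k -> nat) (b b' : Basis n d) : Ek b = Ek b' -> b = b'.
Proof.
set K := (mmax d).+1; set m := (mmax n).+1.
pose Dg (c : Basis n d) (i : 'I_k) := (\sum_(j < m) (val c i j : nat) * K ^ j)%N.
have eE c : Ek c = (\sum_(i < k) Dg c i * (K ^ m) ^ i)%N.
  rewrite /Ek; apply: eq_bigr => i _; rewrite /Dg big_distrl /=.
  by apply: eq_bigr => j _; rewrite expnD expnM [(_ ^ i * _)%N]mulnC mulnA.
have Dlt cc i : (Dg cc i < K ^ m)%N by apply: digits_lt => j; exact: ltn_ord.
move=> h; rewrite !eE in h.
have hD := digits_inj (Dlt b) (Dlt b') h.
apply: val_inj; apply/ffunP => i; apply/ffunP => j; apply: val_inj.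
apply: (digits_inj (c := fun j => (val b i j : nat)) (c' := fun j => (val b' i j : nat)) _ _ (hD i)).
  by move=> j'; exact: ltn_ord.
by move=> j'; exact: ltn_ord.
Qed.

Definition eb (F : fieldType) k (n d : 'I_k -> nat) (b : Basis n d) : V F n d :=
  [ffun b' => (b' == b)%:R].

Lemma decompV (F : fieldType) k (n d : 'I_k -> nat) (v : V F n d) :
  v = \sum_(b : Basis n d) v b *: eb F b.
Proof.
apply/ffunP => b'; rewrite sum_ffunE (bigD1 b') //= big1 => [|b hb].
  by rewrite !ffunE eqxx addr0 [_ *: _]mulr1.
by rewrite !ffunE eq_sym (negbTE hb) [_ *: _]mulr0.
Qed.

Lemma E5 (F : closedFieldType) (hF : [pchar F] =i pred0) k (n d : 'I_k -> nat) p q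
  (phi : {linear V F n d -> 'M[F]_(p, q)}) (u : 'rV[F]_p) (w : 'rV[F]_q) :
  (forall a, (forall i, a i (inord (n i)) != 0) -> u *m phi (simple d a) *m w^T = 0) ->
  forall v, u *m phi v *m w^T = 0.
Proof.
move=> H.
pose mu (b : Basis n d) := (u *m phi (eb F b) *m w^T) 0 0.
have lin v : (u *m phi v *m w^T) 0 0 = \sum_b v b * mu b.
  rewrite {1}(decompV v) linear_sum mulmx_sumr mulmx_suml summxE.
  by apply: eq_bigr => b _; rewrite linearZ /= -scalemxAr -scalemxAl mxE.
pose Fp := \sum_(b : Basis n d) (cb F b * mu b) *: 'X^(Ek b).
have Fv t : t != 0 -> Fp.[t] = 0.
  move=> t0.
  pose at_ := fun (i : 'I_k) (j : 'I_(mmax n).+1) => t ^+ ((mmax d).+1 ^ ((mmax n).+1 * i + j))%N.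
  have := H at_ (fun i => expf_neq0 _ t0) => /matrixP /(_ 0 0); rewrite lin mxE => <-.
  rewrite horner_sum; apply: eq_bigr => b _.
  rewrite hornerZ hornerXn simpleE mulrAC; congr (_ * _); congr (_ * _).
  rewrite /Ek -prodrXr; apply: eq_bigr => i _; rewrite -prodrXr; apply: eq_bigr => j _.
  by rewrite /at_ -exprM mulnC.
have F0 : Fp = 0.
  have : Fp * 'X = 0.
    apply: poly_zero_everywhere => t; rewrite hornerM hornerX.
    by case: (eqVneq t 0) => [->|t0]; rewrite ?mulr0 // Fv // mul0r.
  by move/eqP; rewrite mulf_eq0 polyX_eq0 orbF => /eqP.
have mu0 b : mu b = 0.
  have := congr1 (fun P : {poly F} => P`_(Ek b)) F0; rewrite /= coef0 /Fp coef_sum.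
  rewrite (bigD1 b) //= big1 => [|b' hb'].
    by rewrite coefZ coefXn eqxx mulr1 addr0 => /eqP; rewrite mulf_eq0 (negbTE (cb_neq0 hF b)) /= => /eqP.
  rewrite coefZ coefXn; case: eqP => [/Einj|]; last by rewrite mulr0.
  by move=> e; rewrite e eqxx in hb'.
move=> v; apply/matrixP => i j; rewrite (ord1 i) (ord1 j) lin [RHS]mxE.
by apply: big1 => b _; rewrite mu0 mulr0.
Qed.

Lemma mu_ge (F : fieldType) (W : Type) p q (phi : W -> 'M[F]_(p, q)) (X : W -> Prop) x :
  X x -> (\rank (phi x) <= mu phi X)%N.
Proof.
move=> Xx; rewrite /mu.
have hr : (\rank (phi x) < p.+1)%N by rewrite ltnS rank_leq_row.
apply: (@leq_bigmax_cond _ _ (fun r : 'I_p.+1 => (r : nat)) (Ordinal hr)) => /=.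
by rewrite /pb; case: excluded_middle_informative => // nP; exfalso; apply: nP; exists x.
Qed.

Lemma mu_att (F : fieldType) (W : Type) p q (phi : W -> 'M[F]_(p, q)) (X : W -> Prop) x :
  X x -> exists y, X y /\ \rank (phi y) = mu phi X.
Proof.
move=> Xx; rewrite /mu.
have hr : (\rank (phi x) < p.+1)%N by rewrite ltnS rank_leq_row.
have hA : (0 < #|(fun r : 'I_p.+1 => pb (exists x, X x /\ \rank (phi x) = r))|)%N.
  apply/card_gt0P; exists (Ordinal hr); rewrite /in_mem /=.
  by rewrite /pb; case: excluded_middle_informative => // nP; exfalso; apply: nP; exists x.
have [i0 Hi0 ->] := eq_bigmax_cond (fun r : 'I_p.+1 => (r : nat)) hA.
by move: Hi0; rewrite /in_mem /= /pb; case: excluded_middle_informative => // h _.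
Qed.

Lemma LR_exists (F : fieldType) p q (M : 'M[F]_(p, q)) r : \rank M = r ->
  exists L : 'M[F]_(r, p), exists R : 'M[F]_(q, r), L *m M *m R = 1%:M.
Proof.
move=> hr.
have EM : M = col_ebase M *m pid_mx r *m row_ebase M by rewrite -hr mulmx_ebase.
exists (pid_mx r *m invmx (col_ebase M)), (invmx (row_ebase M) *m pid_mx r).
rewrite {2}EM !mulmxA mulmxKV ?col_ebase_unit //.
rewrite -[_ *m row_ebase M *m invmx _]mulmxA mulmxV ?row_ebase_unit // mulmx1.
rewrite mul_pid_mx minnn (minn_idPr _); last by rewrite -hr rank_leq_row.
by rewrite pid_mx_id ?pid_mx_1 // -hr rank_leq_col.
Qed.

Lemma E7 (F : closedFieldType) k (n d : 'I_k -> nat) p q r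
  (phi : {linear V F n d -> 'M[F]_(p, q)}) (a1 : 'I_k -> 'I_(mmax n).+1 -> F)
  (L : 'M[F]_(r, p)) (R : 'M[F]_(q, r)) :
  \det (L *m phi (simple d a1) *m R) != 0 ->
  exists a0 : 'I_k -> 'I_(mmax n).+1 -> F,
    (forall i, a0 i (inord (n i)) != 0) /\ \det (L *m phi (simple d a0) *m R) != 0.
Proof.
move=> h1.
pose E (i : 'I_k) (j : 'I_(mmax n).+1) : F := (j == inord (n i))%:R.
pose detp := \det (map_mx polyC L *m Pp phi a1 E *m map_mx polyC R).
have ev t : detp.[t] = \det (L *m phi (simple d (fun i j => a1 i j + t * E i j)) *m R).
  by rewrite -[_.[t]]/(horner_eval t _) -det_map_mx !map_mxM !evC ev_Pp.
pose Qp := detp * \prod_(i < k) ('X - (- a1 i (inord (n i)))%:P).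
have Q0 : Qp != 0.
  rewrite mulf_neq0 //.
    apply: contraNneq h1 => h; have := ev 0; rewrite h horner0 => ->.
    by rewrite (@simple_ext F k n d _ a1) // => i j; rewrite mul0r addr0.
  by rewrite prodf_seq_neq0; apply/allP => i _ /=; rewrite polyXsubC_eq0.
have : ~ (forall t, Qp.[t] = 0).
  by move=> h; move: Q0; rewrite (poly_zero_everywhere h) eqxx.
move/not_all_ex_not => [t /eqP Ht].
exists (fun i j => a1 i j + t * E i j); split.
  move=> i; move: Ht; rewrite /Qp hornerM horner_prod mulf_eq0 negb_or => /andP [_].
  rewrite prodf_seq_neq0 => /allP /(_ i (mem_index_enum _)) /=.
  by rewrite hornerXsubC opprK /E eqxx mulr1 addrC.
by move: Ht; rewrite /Qp hornerM mulf_eq0 negb_or ev => /andP [].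
Qed.

Lemma rank_sum_le (F : fieldType) (I : finType) (P : pred I) m n (A : I -> 'M[F]_(m, n)) :
  (\rank (\sum_(i | P i) <<A i>>)%MS <= \sum_(i | P i) \rank (A i))%N.
Proof.
apply: (big_ind2 (fun (M : 'M[F]_n) (x : nat) => \rank M <= x)%N).
- by rewrite mxrank0.
- move=> M1 x1 M2 x2 h1 h2; apply: leq_trans (leq_add h1 h2).
  exact: (mxrank_adds_leqif M1 M2).1.
- by move=> i _; rewrite mxrank_gen.
Qed.

Local Close Scope ring_scope.
Unset Implicit Arguments.

Theorem theorem8p4 (F : closedFieldType) (hF : [pchar F]%R =i pred0)
  (k : nat) (n d : 'I_k -> nat)
  (hn : forall i, 0 < n i) (hd : forall i, 0 < d i)
  (p q : nat) (phi : {linear V F n d -> 'M[F]_(p, q)})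
  (hphi : exists v, phi v != 0%R) :
  (Pot phi <= ((Ynd n d + Znd n d)%:R : rat))%R.
Proof.
rewrite /Pot.
set r := mu phi (@Sset F k n d).
set muV := mu phi (fun _ => True).
have S0 : @Sset F k n d (simple d (fun _ _ => 0%R)) by exists (fun _ _ => 0%R).
have [x1 [[a1 ->] hx1]] := mu_att phi S0.
have [L [R hLR]] := LR_exists hx1.
have [a0 [ha0 hdet]] : exists a0 : 'I_k -> 'I_(mmax n).+1 -> F,
    (forall i, a0 i (inord (n i)) != 0%R) /\ (\det (L *m phi (simple d a0) *m R) != 0)%R.
  by apply: (E7 (a1 := a1)); rewrite hLR det1 oner_neq0.
set a := (dsum d)./2. set D := dsum d.
have haD : a <= D by rewrite /a leq_half_double; lia.
pose Umat := (\sum_(g | Gam g && (deg g <= a)%N) <<(phi (qv a0 g) *m R)^T>>)%MS.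
pose Wmat := (\sum_(g | Gam g && (deg g + a.+1 <= D)%N) <<L *m phi (qv a0 g)>>)%MS.
have [v [_ hv]] := mu_att phi (X := fun _ => True) (x := 0%R) I.
have rk : \rank (phi v) <= \rank Umat + \rank Wmat.
  apply: rank_split => u w hu hw.
  apply: (@E5 F hF k n d p q phi u w) => a' ha'.
  have [c [s [hs ->]]] := E3 d ha' ha0.
  rewrite linearZ /= -scalemxAr -scalemxAl.
  rewrite (E2 (a := a) haD _ hdet hs) ?scaler0 //.
  - by move=> a2; rewrite /r; apply: mu_ge; exists a2.
  - move=> g hG hg.
    have : (trmx (phi (qv a0 g) *m R) <= Umat)%MS.
      by apply: (sumsmx_sup g); [rewrite hG hg | rewrite genmxE].
    case/submxP => Dm HD.
    have e : (phi (qv a0 g) *m R = trmx Umat *m trmx Dm)%R.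
      by rewrite -[LHS]trmxK HD trmx_mul.
    by rewrite -mulmxA e mulmxA hu mul0mx.
  - move=> g hG hg.
    have : ((L *m phi (qv a0 g))%R <= Wmat)%MS.
      by apply: (sumsmx_sup g); [rewrite hG hg | rewrite genmxE].
    case/submxP => Dm ->.
    have hw' : (Wmat *m trmx w = 0)%R by rewrite -[Wmat]trmxK -trmx_mul hw trmx0.
    by rewrite -mulmxA hw' mulmx0.
have rU : \rank Umat <= Ynd n d * r.
  apply: leq_trans (rank_sum_le _ _) _.
  rewrite /Ynd monoCountE cardsE -sum_nat_const.
  apply: leq_sum => g _; rewrite mxrank_tr; exact: rank_leq_col.
have rW : \rank Wmat <= Znd n d * r.
  apply: leq_trans (rank_sum_le _ _) _.
  rewrite /Znd monoCountE cardsE -sum_nat_const.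
  apply: leq_sum => g _; exact: rank_leq_row.
have key : muV <= (Ynd n d + Znd n d) * r.
  by rewrite /muV -hv mulnDl (leq_trans rk) // leq_add.
case: (posnP r) => [r0|rpos].
  by rewrite r0 invr0 mulr0.
by rewrite ler_pdivrMr ?ltr0n // -natrM ler_nat.
Qed.
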